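(* Assume $\ell\ll1$. There is an absolute constant $c>0$ and, for each $q>0$, a constant $c_q$ such that for $N$ sufficiently large, for all $\mathbf x\in\Lambda^N$, all $i$ and all $j\ne j'$ (both $\ne i$): $\|\tilde\chi_{ij}\tilde\chi_{ij'}F_{ij}^q\|_\infty\le e^{-cq/\ell^\varepsilon}$, and for every fixed $i$, $\sum_{j\ne i}\tilde\chi_{ij}F_{ij}^q\le c_q$.
   Context: $\Lambda=\mathbb R^3/\mathbb Z^3$ with torus distance $|x|$. $\ell=\ell(N)$ a length scale; $A\ll B$ means $A/B=O(N^{-\alpha})$ for some $\alpha>0$. $h(x)=\exp(-\sqrt{|x|^2+\ell^2}/\ell)$; fixed $0<\varepsilon<1/10$; $F(u)=e^{-u/\ell^\varepsilon}$; for $\mathbf x\in\Lambda^N$ and $i\ne j$, $F_{ij}=F\big(\sum_{k\ne i,j}[h(x_k-x_i)+h(x_k-x_j)]\big)$ and $\tilde\chi_{ij}=1(|x_i-x_j|\le\ell)$. *)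

(* Defs.v *)
From Stdlib Require Import Reals Lra List Arith Bool.
Open Scope R_scope.

(* Points of the torus Lambda = R^3/Z^3 are represented by real triples
   (any representative); all quantities below are Z^3-periodic. *)
Definition pt := (R * R * R)%type.

Definition psub (a b : pt) : pt :=
  let '(a1, a2, a3) := a in let '(b1, b2, b3) := b in (a1 - b1, a2 - b2, a3 - b3).

Definition dZ (t : R) : R :=
  let f := t - IZR (Int_part t) in Rmin f (1 - f).

(* torus norm |x| = min_{n in Z^3} |x - n| (the minimum separates coordinatewise) *)
Definition tnorm (x : pt) : R :=
  let '(x1, x2, x3) := x in sqrt (dZ x1 ^ 2 + dZ x2 ^ 2 + dZ x3 ^ 2).

Definition h (l : R) (x : pt) : R := exp (- sqrt (tnorm x ^ 2 + l ^ 2) / l).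

Definition F (l eps u : R) : R := exp (- u / Rpower l eps).

Definition sum_over (N : nat) (P : nat -> bool) (f : nat -> R) : R :=
  fold_right Rplus 0 (map f (filter P (seq 0 N))).

Definition Fij (l eps : R) (N : nat) (x : nat -> pt) (i j : nat) : R :=
  F l eps (sum_over N (fun k => negb (Nat.eqb k i) && negb (Nat.eqb k j))
             (fun k => h l (psub (x k) (x i)) + h l (psub (x k) (x j)))).

Definition chi (l : R) (x : nat -> pt) (i j : nat) : R :=
  if Rle_dec (tnorm (psub (x i) (x j))) l then 1 else 0.

(* Main.v *)
Require Import Defs.
From Stdlib Require Import Reals List Arith.
From Stdlib Require Import Lra Bool ZArith Lia.
Open Scope R_scope.
Lemma expl (x y : R) : x <= y -> exp x <= exp y.
Proof. intros [H|H]. left; apply exp_increasing; auto. subst; lra. Qed.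

Definition sl (P : nat -> bool) (f : nat -> R) (l : list nat) :=
  fold_right Rplus 0 (map f (filter P l)).

Lemma sl_le P f g l : (forall k, In k l -> P k = true -> f k <= g k) -> sl P f l <= sl P g l.
Proof.
  induction l as [|a l IH]; intros H; unfold sl; simpl. lra.
  destruct (P a) eqn:E; simpl.
  - apply Rplus_le_compat. apply H; simpl; auto. apply IH; intros; apply H; simpl; auto.
  - apply IH; intros; apply H; simpl; auto.
Qed.

Lemma sl_ge0 P f l : (forall k, In k l -> P k = true -> 0 <= f k) -> 0 <= sl P f l.
Proof.
  intros H. replace 0 with (sl P (fun _ => 0) l). apply sl_le; auto.
  clear H; unfold sl; induction l; simpl; auto. destruct (P a); simpl; auto; lra.
Qed.

Lemma sl_scal P f K l : sl P (fun k => f k * K) l = sl P f l * K.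
Proof. unfold sl; induction l; simpl. lra. destruct (P a); simpl; auto. rewrite IHl; lra. Qed.

Lemma sl_ge_one P f l j : (forall k, In k l -> P k = true -> 0 <= f k) -> In j l -> P j = true ->
  f j <= sl P f l.
Proof.
  induction l as [|a l IH]; intros H Hj Pj; simpl in Hj. contradiction.
  unfold sl; simpl. destruct Hj as [<-|Hj].
  - rewrite Pj; simpl. assert (0 <= sl P f l) by (apply sl_ge0; intros; apply H; simpl; auto).
    unfold sl in H0; lra.
  - assert (f j <= sl P f l) by (apply IH; auto; intros; apply H; simpl; auto).
    unfold sl in H0. destruct (P a) eqn:E; simpl; auto.
    assert (0 <= f a) by (apply H; simpl; auto). lra.
Qed.

Lemma sl_split P f l j : NoDup l -> In j l -> P j = true ->
  sl P f l = sl (fun k => P k && negb (Nat.eqb k j)) f l + f j.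
Proof.
  induction l as [|a l IH]; intros ND Hj Pj; simpl in Hj. contradiction.
  inversion ND; subst. unfold sl; simpl.
  destruct Hj as [<-|Hj].
  - rewrite Pj, Nat.eqb_refl; simpl.
    assert (forall l', ~ In a l' -> sl P f l' = sl (fun k => P k && negb (Nat.eqb k a)) f l').
    { induction l'; intros Hn; unfold sl; simpl; auto. simpl in Hn.
      destruct (Nat.eqb_spec a0 a). exfalso; auto.
      rewrite andb_true_r. destruct (P a0); simpl; unfold sl in IHl'; rewrite IHl'; auto. }
    unfold sl in H; rewrite H; auto; lra.
  - destruct (Nat.eqb_spec a j). subst; contradiction.
    rewrite andb_true_r. unfold sl in IH. destruct (P a); simpl; rewrite IH; auto; lra.
Qed.

Lemma dZ_opp t : dZ (- t) = dZ t.
Proof.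
  unfold dZ. destruct (base_Int_part t) as [A B]. destruct (base_Int_part (-t)) as [C D].
  set (n := Int_part t) in *. set (n' := Int_part (-t)) in *.
  assert (E: IZR (n + n') = 0 \/ IZR (n + n') = -1).
  { assert (-2 < IZR (n+n')) by (rewrite plus_IZR; lra).
    assert (IZR (n+n') <= 0) by (rewrite plus_IZR; lra).
    apply lt_IZR in H. apply le_IZR in H0.
    assert (n + n' = 0 \/ n + n' = -1)%Z as [->| ->] by lia; [left|right]; reflexivity. }
  rewrite plus_IZR in E.
  destruct E as [E|E].
  - replace (- t - IZR n') with (t - IZR n) by lra. reflexivity.
  - replace (- t - IZR n') with (1 - (t - IZR n)) by lra.
    replace (1 - (1 - (t - IZR n))) with (t - IZR n) by lra. apply Rmin_comm.
Qed.

Lemma tnorm_sym a b : tnorm (psub a b) = tnorm (psub b a).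
Proof.
  destruct a as [[a1 a2] a3]; destruct b as [[b1 b2] b3]; simpl.
  rewrite <- (dZ_opp (a1 - b1)), <- (dZ_opp (a2 - b2)), <- (dZ_opp (a3 - b3)).
  repeat rewrite Ropp_minus_distr. reflexivity.
Qed.

Lemma tnorm_ge0 x : 0 <= tnorm x.
Proof. destruct x as [[? ?] ?]; apply sqrt_pos. Qed.

Lemma h_ge0 l x : 0 <= h l x.
Proof. unfold h; left; apply exp_pos. Qed.

Lemma h_big l x : 0 < l -> tnorm x <= l -> exp (-2) <= h l x.
Proof.
  intros Hl Hx. unfold h. apply expl.
  assert (sqrt (tnorm x ^ 2 + l ^ 2) <= 2 * l).
  { rewrite <- (sqrt_pow2 (2*l)) by lra. apply sqrt_le_1_alt.
    pose proof (tnorm_ge0 x). nra. }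
  unfold Rdiv. apply (Rmult_le_reg_r l); auto.
  rewrite Rmult_assoc, Rinv_l by lra. lra.
Qed.

Lemma chi_01 l x i j : chi l x i j = 0 \/ (chi l x i j = 1 /\ tnorm (psub (x i) (x j)) <= l).
Proof. unfold chi; destruct Rle_dec; auto. Qed.

Lemma chi_h l x i k : 0 < l -> chi l x i k * exp (-2) <= h l (psub (x k) (x i)).
Proof.
  intros Hl. destruct (chi_01 l x i k) as [->|[-> H]].
  rewrite Rmult_0_l; apply h_ge0.
  rewrite Rmult_1_l; apply h_big; auto. rewrite tnorm_sym; auto.
Qed.

Lemma chi_ge0 l x i k : 0 <= chi l x i k.
Proof. destruct (chi_01 l x i k) as [->|[-> _]]; lra. Qed.

Lemma Rpower_F l eps u q : Rpower (F l eps u) q = exp (- q * u / Rpower l eps).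
Proof. unfold Rpower at 1, F. rewrite ln_exp. f_equal. unfold Rdiv; ring. Qed.

Lemma Rpower_le1 l eps : 0 < l <= 1 -> 0 < eps -> Rpower l eps <= 1.
Proof.
  intros [H1 H2] He. unfold Rpower. rewrite <- exp_0. apply expl.
  destruct H2 as [H2|H2]. pose proof (ln_increasing _ _ H1 H2). rewrite ln_1 in H. nra.
  subst; rewrite ln_1; lra.
Qed.

Lemma ell_small (ell : nat -> R) :
  (exists alpha C : R, exists N1 : nat, 0 < alpha /\
       forall N : nat, (N1 <= N)%nat -> ell N <= C * Rpower (INR N) (- alpha)) ->
  exists N0 : nat, forall N, (N0 <= N)%nat -> ell N <= 1.
Proof.
  intros (alpha & C & N1 & Ha & HN).
  set (Cm := Rmax C 1).
  assert (HCm : 1 <= Cm) by apply Rmax_r.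
  assert (HC : C <= Cm) by apply Rmax_l.
  set (T := exp (ln Cm / alpha)).
  assert (HT : 0 < T) by apply exp_pos.
  destruct (archimed T) as [U1 _].
  assert (Hup : (0 <= up T)%Z) by (apply le_IZR; lra).
  exists (Nat.max N1 (Z.to_nat (up T))). intros N HN0.
  eapply Rle_trans. apply HN; lia.
  assert (HK : T < INR N).
  { apply Rlt_le_trans with (IZR (up T)); auto.
    rewrite <- (Z2Nat.id (up T)) by auto. rewrite <- INR_IZR_INZ. apply le_INR. lia. }
  assert (Hl : ln T < ln (INR N)) by (apply ln_increasing; auto).
  unfold T in Hl; rewrite ln_exp in Hl.
  assert (ln Cm <= alpha * ln (INR N)).
  { apply (Rmult_lt_compat_l alpha) in Hl; auto. field_simplify in Hl; lra. }
  unfold Rpower.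
  assert (exp (- alpha * ln (INR N)) <= / Cm).
  { rewrite <- (exp_ln Cm) by lra. rewrite <- exp_Ropp. apply expl. lra. }
  pose proof (exp_pos (- alpha * ln (INR N))).
  assert (Cm * / Cm = 1) by (field; lra).
  destruct (Rle_lt_dec C 0). nra. nra.
Qed.

Theorem lemmaB1 :
  exists c : R, 0 < c /\
  forall (eps : R) (ell : nat -> R),
    0 < eps < 1 / 10 ->
    (forall N, 0 < ell N) ->
    (* ell << 1 : ell(N) = O(N^{-alpha}) for some alpha > 0 *)
    (exists alpha C : R, exists N1 : nat, 0 < alpha /\
       forall N : nat, (N1 <= N)%nat -> ell N <= C * Rpower (INR N) (- alpha)) ->
    forall q : R, 0 < q ->
    exists cq : R, exists N0 : nat,
      forall N : nat, (N0 <= N)%nat ->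
      forall x : nat -> pt,
      (forall i j j' : nat, (i < N)%nat -> (j < N)%nat -> (j' < N)%nat ->
         j <> i -> j' <> i -> j <> j' ->
         chi (ell N) x i j * chi (ell N) x i j' * Rpower (Fij (ell N) eps N x i j) q
           <= exp (- c * q / Rpower (ell N) eps)) /\
      (forall i : nat, (i < N)%nat ->
         sum_over N (fun j => negb (Nat.eqb j i))
           (fun j => chi (ell N) x i j * Rpower (Fij (ell N) eps N x i j) q) <= cq).
Proof.
  exists (exp (-2)). split. apply exp_pos.
  intros eps ell Heps Hpos Hsmall q Hq.
  set (b := q * exp (-2)).
  assert (Hb : 0 < b) by (unfold b; pose proof (exp_pos (-2)); nra).
  exists (exp b / b).
  destruct (ell_small ell Hsmall) as [N0 HN0]. exists N0. intros N HN x.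
  assert (Hl : 0 < ell N <= 1) by (split; auto).
  set (l := ell N) in *.
  assert (HPw : 0 < Rpower l eps) by apply exp_pos.
  assert (HPw1 : Rpower l eps <= 1) by (apply Rpower_le1; lra).
  set (Pw := Rpower l eps) in *.
  split.
  - intros i j j' Hi Hj Hj' Hji Hj'i Hjj'.
    destruct (chi_01 l x i j) as [->|[-> Hc]].
    { rewrite !Rmult_0_l; left; apply exp_pos. }
    destruct (chi_01 l x i j') as [->|[-> Hc']].
    { rewrite Rmult_0_r, Rmult_0_l; left; apply exp_pos. }
    rewrite !Rmult_1_l. unfold Fij. rewrite Rpower_F. apply expl.
    match goal with |- context [sum_over N ?P ?f] => set (u := sum_over N P f) end.
    assert (Hu : exp (-2) <= u).
    { unfold u, sum_over. eapply Rle_trans; [|apply (sl_ge_one _ _ _ j')].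
      - pose proof (h_ge0 l (psub (x j') (x j))).
        assert (exp (-2) <= h l (psub (x j') (x i))).
        { apply h_big; try lra. rewrite tnorm_sym; auto. }
        lra.
      - intros k _ _. pose proof (h_ge0 l (psub (x k) (x i))).
        pose proof (h_ge0 l (psub (x k) (x j))). lra.
      - apply in_seq; lia.
      - apply Nat.eqb_neq in Hj'i. apply not_eq_sym, Nat.eqb_neq in Hjj'.
        rewrite Hj'i, Hjj'. reflexivity. }
    unfold Rdiv. apply Rmult_le_compat_r. left; apply Rinv_0_lt_compat; auto. nra.
  - intros i Hi.
    set (m := sum_over N (fun j => negb (Nat.eqb j i)) (chi l x i)).
    assert (Hm0 : 0 <= m) by (apply sl_ge0; intros; apply chi_ge0).
    eapply Rle_trans.
    { apply (sl_le _ _ (fun j => chi l x i j * exp (- b * (m - 1)))).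
      intros k Hk Pk.
      destruct (chi_01 l x i k) as [Hc|[Hc Hk2]]; rewrite Hc.
      { lra. }
      rewrite !Rmult_1_l. unfold Fij. rewrite Rpower_F. apply expl.
      match goal with |- context [sum_over N ?P ?f] => set (u := sum_over N P f) end.
      assert (Hmu : m = sl (fun k0 => negb (Nat.eqb k0 i) && negb (Nat.eqb k0 k)) (chi l x i) (seq 0 N) + 1).
      { unfold m. etransitivity. apply (sl_split _ _ _ k); auto. apply seq_NoDup. rewrite Hc; reflexivity. }
      assert (Hu : exp (-2) * (m - 1) <= u).
      { rewrite Hmu. replace (sl _ _ _ + 1 - 1) with (sl (fun k0 => negb (Nat.eqb k0 i) && negb (Nat.eqb k0 k)) (chi l x i) (seq 0 N)) by ring.
        rewrite Rmult_comm, <- sl_scal. unfold u, sum_over. apply sl_le.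
        intros k0 _ _. pose proof (chi_h l x i k0 (proj1 Hl)).
        pose proof (h_ge0 l (psub (x k0) (x k))). lra. }
      assert (Hu0 : 0 <= u).
      { apply sl_ge0. intros k0 _ _. pose proof (h_ge0 l (psub (x k0) (x i))).
        pose proof (h_ge0 l (psub (x k0) (x k))). lra. }
      assert (Hd : q * u / Pw * Pw = q * u) by (field; lra).
      assert (0 <= q * u / Pw) by (unfold Rdiv; apply Rmult_le_pos; [nra| left; apply Rinv_0_lt_compat; auto]).
      assert (q * u <= q * u / Pw) by nra.
      assert (q * (exp (-2) * (m - 1)) <= q * u) by (apply Rmult_le_compat_l; lra).
      fold Pw. unfold b. replace (- q * u / Pw) with (- (q * u / Pw)) by (unfold Rdiv; ring).
      lra. }
    change (sl (fun j => negb (Nat.eqb j i)) (fun j => chi l x i j * exp (- b * (m - 1))) (seq 0 N) <= exp b / b).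
    rewrite sl_scal. fold m. fold (sum_over N (fun j => negb (Nat.eqb j i)) (chi l x i)). fold m.
    replace (- b * (m - 1)) with (b + - (b * m)) by ring.
    rewrite exp_plus, exp_Ropp.
    pose proof (exp_ineq1_le (b * m)).
    set (E := exp (b * m)) in *. set (eb := exp b).
    assert (HE : 0 < E) by apply exp_pos.
    assert (Heb : 0 < eb) by apply exp_pos.
    assert (HEy : E * / E = 1) by (field; lra).
    assert (Hbz : b * / b = 1) by (field; lra).
    assert (0 < / E) by (apply Rinv_0_lt_compat; auto).
    assert (0 < / b) by (apply Rinv_0_lt_compat; auto).
    assert (0 <= eb * / b * / E * (E - b * m)) by (repeat apply Rmult_le_pos; lra).
    assert (Hid : eb * / b * / E * (E - b * m) = eb * / b * (E * / E) - m * (eb * / E) * (b * / b)) by ring.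
    rewrite HEy, Hbz in Hid. unfold Rdiv. change (m * (eb * / E) <= eb * / b). lra.
Qed.
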